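(* Assume the standing assumptions and Assumption (T). Let $\bar u\in V$, $\epsilon>0$, and let $u_\epsilon\in V$ satisfy \[ \alpha\langle u_\epsilon,v\rangle_V+\beta G_\epsilon'(u_\epsilon)v+\langle u_\epsilon-\bar u,v\rangle_{L^2(\Omega)}=-F'(u_\epsilon)v\qquad\forall v\in V, \] where $F'(u_\epsilon)$ is represented by a function in $L^1(\Omega)$, i.e. $F'(u_\epsilon)v=\int_\Omega F'(u_\epsilon)\,v\,dx$ for $v\in V\cap L^\infty(\Omega)$. Let $\lambda_\epsilon:=2u_\epsilon\psi_\epsilon'(u_\epsilon^2)$ (the function representing $G_\epsilon'(u_\epsilon)$). Then \[ \beta\|\lambda_\epsilon\|_{L^1(\Omega)}\le\|F'(u_\epsilon)\|_{L^1(\Omega)}+\|\bar u\|_{L^1(\Omega)} . \]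
   Context: Standing assumptions: $\Omega\subset\mathbb R^d$ bounded Lipschitz domain; $V$ real Hilbert space with inner product $\langle\cdot,\cdot\rangle_V$, $V\subset L^2(\Omega)$ with compact and dense embedding; $F:V\to\mathbb R$ weakly lower semicontinuous, bounded below by an affine function, continuously Fréchet differentiable. $\alpha>0$, $\beta>0$, $p\in(0,1)$. For $\epsilon>0$, $\psi_\epsilon(t)=\frac p2\frac{t}{\epsilon^{2-p}}+(1-\frac p2)\epsilon^p$ if $t\in[0,\epsilon^2)$ and $\psi_\epsilon(t)=t^{p/2}$ if $t\ge\epsilon^2$, $\psi_\epsilon'(t)=\frac p2\min(\epsilon^{p-2},t^{(p-2)/2})$; $G_\epsilon(u)=\int_\Omega\psi_\epsilon(|u|^2)dx$, $G_\epsilon'(u)v=\int_\Omega 2u\psi_\epsilon'(u^2)v\,dx$. Assumption (T): (i) for every $u\in V$ the function $v:=\max(-1,\min(u,1))$ belongs to $V$ and satisfies $\langle u,v\rangle_V\ge\|v\|_V^2$; (ii) $C_0(\Omega)\cap V$ is dense in $V$ and in $C_0(\Omega)$ with respect to their norms. *)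

(* Defs.v *)
From HB Require Import structures.
From mathcomp Require Import all_boot all_order all_algebra.
From mathcomp Require Import all_classical all_reals all_analysis.
Set Implicit Arguments.
Unset Strict Implicit.
Unset Printing Implicit Defensive.
Import Order.TTheory GRing.Theory Num.Theory.
Import numFieldNormedType.Exports.
Local Open Scope classical_set_scope.
Local Open Scope ring_scope.

Section Geometry.
Context {R : realType} {d : nat}.
Local Notation pt := (d.-tuple R).

Definition tsub (x y : pt) : pt := [tuple tnth x i - tnth y i | i < d].
Definition tscale (a : R) (x : pt) : pt := [tuple a * tnth x i | i < d].
Definition tdot (x y : pt) : R := \sum_(i < d) tnth x i * tnth y i.
Definition edist (x y : pt) : R := Num.sqrt (tdot (tsub x y) (tsub x y)).

Definition eopen (A : set pt) : Prop :=
  forall x, A x -> exists2 r : R, 0 < r & forall y, edist x y < r -> A y.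

Definition ebounded (A : set pt) : Prop :=
  exists M : R, forall x, A x -> forall i, `|tnth x i| <= M.

Definition econnected (A : set pt) : Prop :=
  A !=set0 /\
  forall B C : set pt, eopen B -> eopen C -> A `<=` B `|` C ->
    A `&` B `&` C = set0 -> A `&` B = set0 \/ A `&` C = set0.

Definition eboundary (A : set pt) (x0 : pt) : Prop :=
  ~ A x0 /\ forall r : R, 0 < r -> exists y, A y /\ edist x0 y < r.

(** Bounded Lipschitz domain: bounded, open, connected, and near every
    boundary point x0 it lies (in a suitably rotated coordinate system with
    last axis the unit vector nu) below the graph of a Lipschitz function
    phi defined on the hyperplane orthogonal to nu. *)
Definition bounded_lipschitz_domain (A : set pt) : Prop :=
  [/\ eopen A, ebounded A, econnected A &
   forall x0, eboundary A x0 ->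
     exists r : R, exists nu : pt, exists phi : pt -> R, exists L : R,
      [/\ 0 < r, tdot nu nu = 1,
       (forall y z, tdot y nu = 0 -> tdot z nu = 0 ->
          `|phi y - phi z| <= L * edist y z) &
       forall x, edist x x0 < r ->
         (A x <-> tdot (tsub x x0) nu
                   < phi (tsub (tsub x x0) (tscale (tdot (tsub x x0) nu) nu)))]].

Definition box (a b : pt) : set pt :=
  [set x | forall i, tnth a i <= tnth x i <= tnth b i].

(** mu is the Lebesgue measure on (the Borel sets of) R^d: it is determined
    by its values on boxes. *)
Definition is_lebesgue_measure (mu : {measure set pt -> \bar R}) : Prop :=
  forall a b : pt, (forall i, tnth a i <= tnth b i) ->
    mu (box a b) = (\prod_(i < d) (tnth b i - tnth a i))%:E.

Definition L2fun (mu : {measure set pt -> \bar R}) (O : set pt) (f : pt -> R) : Prop :=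
  measurable_fun O f /\ mu.-integrable O (fun x => (f x ^+ 2)%:E).

Definition econt_on (O : set pt) (f : pt -> R) : Prop :=
  forall x, O x -> forall e : R, 0 < e -> exists2 r : R, 0 < r &
    forall y, O y -> edist x y < r -> `|f y - f x| < e.

(** C_0(O): continuous on O and vanishing at the boundary of O
    ({|f| >= e} stays at positive distance from the complement of O). *)
Definition C0fun (O : set pt) (f : pt -> R) : Prop :=
  econt_on O f /\
  forall e : R, 0 < e -> exists2 r : R, 0 < r &
    forall x, O x -> e <= `|f x| -> forall y, ~ O y -> r <= edist x y.

End Geometry.

Section Hilbert.
Context {R : realType}.

(** ip is an inner product on V inducing its norm (V complete => Hilbert). *)
Definition inner_product_of (V : normedModType R) (ip : V -> V -> R) : Prop :=
  [/\ forall (a : R) (u v w : V), ip (a *: u + v) w = a * ip u w + ip v w,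
      forall u v : V, ip u v = ip v u &
      forall u : V, ip u u = `|u| ^+ 2].

Context {d : nat}.
Local Notation pt := (d.-tuple R).

(** iota : V -> L^2(O) is a linear, injective, compact embedding with dense
    range (iota u is a representative of the L^2 class of u). *)
Definition compact_dense_embedding (mu : {measure set pt -> \bar R})
    (O : set pt) (V : normedModType R) (iota : V -> pt -> R) : Prop :=
  [/\ forall u, L2fun mu O (iota u),
      forall (a : R) (u v : V),
        {ae mu, forall x, O x -> iota (a *: u + v) x = a * iota u x + iota v x},
      forall u, {ae mu, forall x, O x -> iota u x = 0} -> u = 0,
      (forall un : nat -> V, (exists M : R, forall n, `|un n| <= M) ->
        exists (phi : nat -> nat) (g : pt -> R),
          [/\ {homo phi : m n / (m < n)%N >-> (m < n)%N}, L2fun mu O g &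
              (fun n => (\int[mu]_(x in O) ((iota (un (phi n)) x - g x) ^+ 2)%:E)%E)
                @ \oo --> 0%E]) &
      forall g, L2fun mu O g -> forall e : R, 0 < e ->
        exists u, (\int[mu]_(x in O) ((iota u x - g x) ^+ 2)%:E < e%:E)%E].

Definition clip (t : R) : R := Num.max (-1) (Num.min t 1).

(** Assumption (T), the space V being identified with its image in L^2(O). *)
Definition assumption_T (mu : {measure set pt -> \bar R}) (O : set pt)
    (V : normedModType R) (ip : V -> V -> R) (iota : V -> pt -> R) : Prop :=
  [/\
      forall u : V, exists v : V,
        {ae mu, forall x, O x -> iota v x = clip (iota u x)} /\ `|v| ^+ 2 <= ip u v,
      forall (u : V) (e : R), 0 < e -> exists (w : V) (c : pt -> R),
        [/\ C0fun O c, {ae mu, forall x, O x -> iota w x = c x} & `|u - w| < e] &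
      forall c : pt -> R, C0fun O c -> forall e : R, 0 < e ->
        exists (w : V) (c' : pt -> R),
        [/\ C0fun O c', {ae mu, forall x, O x -> iota w x = c' x} &
            exists2 eta : R, eta < e & forall x, O x -> `|c x - c' x| <= eta]].

Definition weakly_lsc (V : normedModType R) (ip : V -> V -> R) (F : V -> R) : Prop :=
  forall (un : nat -> V) (u : V),
    (forall w, (fun n => ip (un n) w) @ \oo --> ip u w) ->
    ((F u)%:E <= limn_einf (fun n => (F (un n))%:E))%E.

Definition affine_minorant (V : normedModType R) (ip : V -> V -> R) (F : V -> R) : Prop :=
  exists (w : V) (c : R), forall u, ip w u + c <= F u.

Definition C1_frechet (V : normedModType R) (F : V -> R) : Prop :=
  (forall u : V, differentiable F u) /\
  forall (u : V) (e : R), 0 < e -> exists2 r : R, 0 < r &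
    forall u' : V, `|u' - u| < r -> forall h : V, `|'d F u' h - 'd F u h| <= e * `|h|.

(** psi_eps and its derivative (psi_eps' (0) = p/2 eps^(p-2), the value of
    the min at t = 0 where t^((p-2)/2) = +oo) *)
Definition psi_eps (p eps t : R) : R :=
  if t < eps ^+ 2 then p / 2 * (t / eps `^ (2 - p)) + (1 - p / 2) * eps `^ p
  else t `^ (p / 2).

Definition dpsi_eps (p eps t : R) : R :=
  if t <= 0 then p / 2 * eps `^ (p - 2)
  else p / 2 * Num.min (eps `^ (p - 2)) (t `^ ((p - 2) / 2)).

Definition G_eps (mu : {measure set pt -> \bar R}) (O : set pt) (p eps : R)
    (u : pt -> R) : R :=
  Rintegral mu O (fun x => psi_eps p eps (`|u x| ^+ 2)).

Definition dG_eps (mu : {measure set pt -> \bar R}) (O : set pt) (p eps : R)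
    (u v : pt -> R) : R :=
  Rintegral mu O (fun x => 2 * u x * dpsi_eps p eps (u x ^+ 2) * v x).

End Hilbert.

(* Main.v *)
Require Import Defs.
From HB Require Import structures.
From mathcomp Require Import all_boot all_order all_algebra.
From mathcomp Require Import all_classical all_reals all_analysis.
From mathcomp Require Import lra ring.
Import Order.TTheory GRing.Theory Num.Theory.
Import numFieldNormedType.Exports.
Local Open Scope classical_set_scope.
Local Open Scope ring_scope.
Import measurable_realfun.

Lemma clip_cases (R : realType) (t : R) :
  (t <= -1 /\ clip t = -1) \/ (1 <= t /\ clip t = 1) \/ (-1 < t < 1 /\ clip t = t).
Proof.
rewrite /clip -[Num.min _ _]/(Order.min t 1) -[Num.max _ _]/(Order.max (-1) (Order.min t 1)).
rewrite minEle maxEle.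
have [h1|h1] := leP t 1; have [h2|h2] := leP t (-1).
- left; split => //. case: ifP => // h. lra.
- case: (eqVneq t 1) => [ht|ht].
  + subst t. right; left; split=> //. case: ifP => //. lra.
  + right; right; split; first lra. case: ifP => //. lra.
- lra.
- right; left; split; first lra. case: ifP => //. lra.
Qed.

Lemma key (R : realType) (x D c0 dl : R) : 0 <= D <= c0 -> 0 < dl ->
  `|2*x*D| <= (2*x*D) * clip (x/dl) + 2*c0*dl.
Proof.
move=> /andP[D0 Dc] dl0.
have H1 : x / dl * dl = x by rewrite divfK // gt_eqF.
rewrite -{1 2}H1; move: (x/dl) => y.
case: (@clip_cases _ y) => [[h ->]|[[h ->]|[/andP[h1 h2] ->]]].
- have hyd : y * dl <= - dl by nra.
  have hp : 0 <= (- (y * dl)) * D by apply: mulr_ge0; lra.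
  rewrite ler0_norm; last by nra. nra.
- have hyd : dl <= y * dl by nra.
  have hp : 0 <= (y * dl) * D by apply: mulr_ge0; lra.
  rewrite ger0_norm; last by nra. nra.
- have : `|y * dl| <= dl by rewrite ler_norml; apply/andP; split; nra.
  move=> hn. rewrite normrM normrM (ger0_norm D0) (@ger0_norm _ 2) //.
  have h3 : 0 <= (y * y) * (dl * D) by apply: mulr_ge0; [exact: sqr_ge0|apply: mulr_ge0; lra].
  have h4 : `|y * dl| * D <= dl * c0.
    apply: ler_pM => //; exact: normr_ge0.
  nra.
Qed.

Lemma uclip_ge0 (R : realType) (x dl : R) : 0 < dl -> 0 <= x * clip (x / dl).
Proof.
move=> dl0.
have H1 : x / dl * dl = x by rewrite divfK // gt_eqF.
rewrite -{1}H1; move: (x/dl) => y.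
case: (@clip_cases _ y) => [[h ->]|[[h ->]|[/andP[h1 h2] ->]]]; nra.
Qed.

Lemma dpsi_bnd (R : realType) (p eps t : R) : 0 < p ->
  0 <= dpsi_eps p eps t <= p / 2 * eps `^ (p - 2).
Proof.
move=> p0; have p2 : 0 <= p / 2 by rewrite divr_ge0 // ltW.
rewrite /dpsi_eps; case: ifP => _.
  by rewrite lexx andbT mulr_ge0 // powR_ge0.
apply/andP; split.
  apply: mulr_ge0 => //. rewrite -[Num.min _ _]/(Order.min _ _) le_min !powR_ge0 //.
apply: ler_wpM2l => //. rewrite -[Num.min _ _]/(Order.min _ _). by rewrite ge_min lexx.
Qed.

Lemma dpsi_meas (R : realType) (p eps : R) :
  measurable_fun [set: R] (dpsi_eps p eps).
Proof.
rewrite /dpsi_eps.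
apply: measurable_fun_ifT.
  by apply: measurable_realfun.measurable_fun_ler => //; exact: measurable_cst.
  exact: measurable_cst.
apply: measurable_realfun.measurable_funM; first exact: measurable_cst.
apply: (measurable_realfun.measurable_minr (f := cst (eps `^ (p - 2)))); first exact: measurable_cst.
exact: measurable_realfun.measurable_powR.
Qed.

Lemma clip_meas (R : realType) : measurable_fun [set: R] clip.
Proof.
apply: (measurable_realfun.measurable_maxr (f := cst (-1))); first exact: measurable_cst.
apply: (measurable_realfun.measurable_minr (g := cst 1)); last exact: measurable_cst.
exact: measurable_id.
Qed.

Section Geo.
Context {R : realType} {d : nat}.
Local Notation pt := (d.-tuple R).

Lemma coord_meas (i : 'I_d) (Y : set R) : measurable Y ->
  measurable [set x : pt | Y (tnth x i)].
Proof.
move=> mY; have := @measurable_tnth _ R d i measurableT Y mY.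
by rewrite setTI.
Qed.

Lemma prodset_meas (P : 'I_d -> set R) : (forall i, measurable (P i)) ->
  measurable [set x : pt | forall i, P i (tnth x i)].
Proof.
move=> mP.
have -> : [set x : pt | forall i, P i (tnth x i)] =
   \bigcap_(i in [set: 'I_d]) [set x : pt | P i (tnth x i)].
  apply/seteqP; split => x /= h. by move=> i _; apply: h. by move=> i; apply: h.
apply: fin_bigcap_measurable; first exact: finite_finset.
by move=> i _; exact: coord_meas.
Qed.

Definition cubef (c : 'I_d -> R) (s : R) : set pt :=
  [set x | forall i, `|tnth x i - c i| < s].

Lemma cubef_meas c s : measurable (cubef c s).
Proof.
have -> : cubef c s = [set x : pt | forall i, `](c i - s), (c i + s)[%classic (tnth x i)].
  apply/seteqP; split => x /= h i; have := h i.
  - by rewrite in_itv /= ltr_distl.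
  - by rewrite in_itv /= ltr_distl.
by apply: (prodset_meas (fun i => `](c i - s), (c i + s)[%classic)) => i; exact: measurable_itv.
Qed.


Lemma tdot_le (x y : pt) (e : R) : (forall i, `|tnth x i - tnth y i| <= e) ->
  tdot (tsub x y) (tsub x y) <= d%:R * e ^+ 2.
Proof.
move=> h; rewrite /tdot.
under eq_bigr do rewrite /tsub !tnth_mktuple.
apply: (le_trans (ler_sum _ (fun i (_ : true) => (_ : _ <= e ^+ 2)))).
  by move=> i _; have := h i; rewrite ler_norml => /andP[h1 h2]; nra.
by rewrite mulr_natl; have := sumr_const 'I_d (e ^+ 2); rewrite card_ord => <-.
Qed.

Lemma eopen_meas (O : set pt) : eopen O -> measurable O.
Proof.
move=> oO.
pose F := fun qs : (d.-tuple rat * rat) => [set x : pt |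
  (cubef (fun i => ratr (tnth qs.1 i)) (ratr qs.2) `<=` O)%classic /\
  cubef (fun i => ratr (tnth qs.1 i)) (ratr qs.2) x].
have -> : O = \bigcup_qs F qs.
  apply/seteqP; split; last first.
    by move=> x [qs _ [sub cx]]; exact: sub.
  move=> x Ox; have [r r0 hr] := oO x Ox.
  pose D : R := 2 * (d%:R + 1).
  have D0 : 0 < D by rewrite /D; apply: mulr_gt0 => //; apply: ltr_pwDr => //.
  have [s] : exists s : rat, ratr s \in `]0, r / D[.
    by apply: rat_in_itvoo; apply: divr_gt0.
  rewrite in_itv /= => /andP[s0 s1].
  have hq : forall i : 'I_d, exists q : rat, `|tnth x i - ratr q| < ratr s.
    move=> i; have [q] := @rat_in_itvoo R (tnth x i - ratr s) (tnth x i + ratr s) ltac:(lra).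
    by rewrite in_itv /= => hq; exists q; rewrite ltr_distlC.
  have [f hf] := boolp.choice hq.
  exists ([tuple f i | i < d], s) => //; split; last first.
    by move=> i /=; rewrite tnth_mktuple.
  move=> y /= hy; apply: hr; rewrite /edist.
  have hxy : forall i, `|tnth x i - tnth y i| <= 2 * ratr s.
    move=> i; have := hy i; have := hf i; rewrite tnth_mktuple => h1 h2.
    have := ler_distD (ratr (f i)) (tnth x i) (tnth y i).
    rewrite (distrC (ratr (f i))) => h3. lra.
  have := @tdot_le x y _ hxy => ht.
  have hD : r / D * D = r by rewrite divfK // gt_eqF.
  have hsd : ratr s * D < r by rewrite -hD ltr_pM2r.
  have hlt : tdot (tsub x y) (tsub x y) < r ^+ 2.
    apply: (le_lt_trans ht).
    have hd : 0 <= d%:R :> R by [].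
    have ha : 0 < ratr s * D by apply: mulr_gt0.
    have h1 : (ratr s * D) ^+ 2 < r ^+ 2.
      by rewrite -subr_gt0 subr_sqr; apply: mulr_gt0; lra.
    apply: (le_lt_trans _ h1).
    have hs2 : 0 <= ratr s ^+ 2 :> R by exact: sqr_ge0.
    rewrite /D -subr_ge0.
    have -> : (ratr s * (2 * (d%:R + 1))) ^+ 2 - d%:R * (2 * ratr s) ^+ 2 =
      ratr s ^+ 2 * (4 * (d%:R ^+ 2 + d%:R + 1)) :> R by ring.
    apply: mulr_ge0 => //; nra.
  by rewrite -(gtr0_norm r0) -sqrtr_sqr ltr_sqrt // exprn_gt0.
apply: countable_bigcupT_measurable; first exact: countableP.
move=> [q s].
case: (boolp.pselect (cubef (fun i => ratr (tnth q i)) (ratr s) `<=` O)%classic) => h.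
  have -> : F (q, s) = cubef (fun i => ratr (tnth q i)) (ratr s).
    by apply/seteqP; split => x /=; [case|].
  exact: cubef_meas.
have -> : F (q, s) = set0 by apply/seteqP; split => x // [].
exact: measurable0.
Qed.


Lemma box_meas (a b : pt) : measurable (box a b).
Proof.
have -> : box a b = [set x : pt | forall i, `[tnth a i, tnth b i]%classic (tnth x i)].
  by apply/seteqP; split => x /= h i; have := h i; rewrite /= in_itv.
by apply: (prodset_meas (fun i => `[tnth a i, tnth b i]%classic)) => i; exact: measurable_itv.
Qed.

Lemma ebounded_fin (mu : {measure set pt -> \bar R}) (O : set pt) :
  is_lebesgue_measure mu -> ebounded O -> measurable O -> (mu O < +oo)%E.
Proof.
move=> hmu [M hM] mO.
pose a : pt := [tuple - `|M| | i < d]; pose b : pt := [tuple `|M| | i < d].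
have sub : (O `<=` box a b)%classic.
  move=> x Ox i; rewrite !tnth_mktuple; have := hM x Ox i.
  have := ler_norm M => h1 h2; apply/andP; split.
    by have := h2; rewrite ler_norml => /andP[] h3 _; lra.
  by have := h2; rewrite ler_norml => /andP[] _ h3; lra.
apply: (le_lt_trans (le_measure mu (mem_set mO) (mem_set (box_meas a b)) sub)).
have hab : forall i, tnth a i <= tnth b i.
  by move=> i; rewrite !tnth_mktuple; have := normr_ge0 M; lra.
have := hmu a b hab => /= E.
by move: E; rewrite /box => ->; rewrite ltry.
Qed.

End Geo.

Section Int.
Context {R : realType} {d : nat}.
Local Notation pt := (d.-tuple R).
Variables (mu : {measure set pt -> \bar R}) (O : set pt).
Hypotheses (mO : measurable O) (Ofin : (mu O < +oo)%E).

Lemma int_cst (k : R) : mu.-integrable O (EFin \o cst k).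
Proof.
apply/integrableP; split; first exact/measurable_EFinP/measurable_cst.
rewrite (_ : (fun x => _) = cst (`|k|%:E)); last by apply/funext.
rewrite integral_cst //.
have := Ofin; rewrite -ge0_fin_numE // => /fineK <-.
by rewrite -EFinM ltry.
Qed.

Lemma int_dom (f h : pt -> R) : measurable_fun O f ->
  (forall x, O x -> `|f x| <= `|h x|) ->
  mu.-integrable O (EFin \o h) -> mu.-integrable O (EFin \o f).
Proof.
move=> mf hb ih; apply: le_integrable ih => //.
  exact/measurable_EFinP.
Qed.

Lemma int_L2 (f : pt -> R) : L2fun mu O f -> mu.-integrable O (EFin \o f).
Proof.
move=> [mf i2]; apply: (@int_dom f (fun x => f x ^+ 2 + 1)) => //.
  move=> x _; rewrite (ger0_norm (_ : 0 <= f x ^+ 2 + 1)); last first.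
    by apply: addr_ge0 => //; exact: sqr_ge0.
  by have [h|h] := leP 0 (f x); [rewrite ger0_norm //|rewrite ltr0_norm //]; nra.
apply: (eq_integrable mO _ _ _ (integrableD mO i2 (int_cst 1))).
by move=> x _ /=; rewrite EFinD.
Qed.

Lemma Rint_ae (h w k : pt -> R) :
  measurable_fun O (fun x => h x * w x) -> measurable_fun O (fun x => h x * k x) ->
  {ae mu, forall x, O x -> w x = k x} ->
  Rintegral mu O (fun x => h x * w x) = Rintegral mu O (fun x => h x * k x).
Proof.
move=> m1 m2 hae; rewrite /Rintegral; congr fine.
apply: ae_eq_integral => //; try exact/measurable_EFinP.
apply: filterS hae => x hx Ox /=; by rewrite hx.
Qed.

End Int.

Theorem lemma5p7 (R : realType) (d : nat)
    (mu : {measure set (d.-tuple R) -> \bar R}) (O : set (d.-tuple R))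
    (V : completeNormedModType R) (ip : V -> V -> R)
    (iota : V -> d.-tuple R -> R) (F : V -> R) (alpha beta p : R)
    (ubar : V) (eps : R) (ueps : V) (g : d.-tuple R -> R) :
  (* standing assumptions *)
  bounded_lipschitz_domain O ->
  is_lebesgue_measure mu ->
  inner_product_of ip ->
  compact_dense_embedding mu O iota ->
  weakly_lsc ip F -> affine_minorant ip F -> C1_frechet F ->
  0 < alpha -> 0 < beta -> 0 < p < 1 ->
  (* Assumption (T) *)
  assumption_T mu O ip iota ->
  0 < eps ->
  (* optimality system for ueps *)
  (forall v : V,
     alpha * ip ueps v + beta * dG_eps mu O p eps (iota ueps) (iota v)
     + Rintegral mu O (fun x => (iota ueps x - iota ubar x) * iota v x)
     = - 'd F ueps v) ->
  (* F'(ueps) is represented by g in L^1(O) *)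
  measurable_fun O g -> mu.-integrable O (EFin \o g) ->
  (forall v : V, (exists M : R, {ae mu, forall x, O x -> `|iota v x| <= M}) ->
     'd F ueps v = Rintegral mu O (fun x => g x * iota v x)) ->
  let lambda := fun x => 2 * iota ueps x * dpsi_eps p eps (iota ueps x ^+ 2) in
  beta * Rintegral mu O (fun x => `|lambda x|)
  <= Rintegral mu O (fun x => `|g x|) + Rintegral mu O (fun x => `|iota ubar x|).
Proof.
move=> hO hmu hip hemb _ _ _ a0 b0 hp hT eps0 heq mg ig hg; rewrite /=.
case: hO => oO bO _ _. case: hip => ipl ips ipn. case: hemb => hL2 hlin _ _ _.
case/andP: hp => p0 p1. case: hT => hTi _ _.
have mO := eopen_meas O oO.
have Ofin := ebounded_fin mu O hmu bO mO.
set u := iota ueps; set b := iota ubar.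
have [mu_ _] := hL2 ueps.
have [mb_ _] := hL2 ubar.
have iu := int_L2 mu O mO Ofin _ (hL2 ueps).
have ib := int_L2 mu O mO Ofin _ (hL2 ubar).
pose c0 := p / 2 * eps `^ (p - 2).
have hD : forall t, 0 <= dpsi_eps p eps t <= c0 by move=> t; exact: dpsi_bnd.
pose lam := fun x => 2 * u x * dpsi_eps p eps (u x ^+ 2).
change (beta * Rintegral mu O (fun x => `|lam x|) <=
  Rintegral mu O (fun x => `|g x|) + Rintegral mu O (fun x => `|b x|)).
have mlam : measurable_fun O lam.
  apply: measurable_funM.
    by apply: measurable_funM => //; exact: measurable_cst.
  apply: (measurableT_comp (f := dpsi_eps p eps) (g := fun x => u x ^+ 2) (dpsi_meas _ p eps)).
  exact: measurable_funX.
have mk : forall dl : R, measurable_fun O (fun x => clip (u x / dl)).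
  move=> dl; apply: (measurableT_comp (@clip_meas R)).
  by apply: measurable_funM => //; exact: measurable_cst.
have kb : forall dl x, `|clip (u x / dl)| <= 1.
  move=> dl x; case: (@clip_cases R (u x / dl)) => [[_ ->]|[[_ ->]|[h ->]]].
  - by rewrite normrN normr1.
  - by rewrite normr1.
  - by rewrite ler_norml; case/andP: h => h1 h2; apply/andP; split; apply: ltW.
have ilam : mu.-integrable O (EFin \o lam).
  apply: (int_dom mu O mO _ (fun x => 2 * c0 * u x)) => //.
    move=> x _; rewrite /lam normrM normrM [X in _ <= X]normrM.
    have := hD (u x ^+ 2) => /andP[h1 h2].
    rewrite (ger0_norm h1) (ger0_norm (_ : 0 <= 2 * c0)); last first.
      by apply: mulr_ge0 => //; apply: le_trans h2.
    have := normr_ge0 (u x); rewrite (@ger0_norm _ 2) //; nra.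
  apply: (eq_integrable mO _ _ _ (integrableZl mO (2 * c0) iu)).
  by move=> x _ /=; rewrite EFinM.
have idom := int_dom mu O mO.
have iabs : forall f : d.-tuple R -> R, measurable_fun O f ->
    mu.-integrable O (EFin \o f) -> mu.-integrable O (EFin \o (fun x => `|f x|)).
  move=> f mf jf; apply: (idom _ f) => //; last by move=> x _; rewrite normr_id.
  by apply: measurableT_comp.
have iprod : forall f : d.-tuple R -> R, forall dl, measurable_fun O f ->
    mu.-integrable O (EFin \o f) ->
    mu.-integrable O (EFin \o (fun x => f x * clip (u x / dl))).
  move=> f dl mf jf; apply: (idom _ f) => //.
    by apply: measurable_funM => //; exact: mk.
  move=> x _; rewrite normrM; have := kb dl x; have := normr_ge0 (f x); nra.
have claim : forall dl, 0 < dl -> beta * Rintegral mu O (fun x => lam x * clip (u x / dl))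
    <= Rintegral mu O (fun x => `|g x|) + Rintegral mu O (fun x => `|b x|).
  move=> dl dl0.
  have [v [hvae hvip]] := hTi (dl^-1 *: ueps).
  have ae0 := hlin 1 0 0.
  have ae1 := hlin dl^-1 ueps 0.
  have aeF : Filter (nbhs (almost_everywhere mu)) by exact _.
  have h12 := filterS2 aeF (fun x h1 h2 => conj h1 h2) hvae ae1.
  have hw : {ae mu, forall x, O x -> iota v x = clip (u x / dl)}.
    apply: (filterS2 aeF _ h12 ae0) => x [h1 h2] h3 Ox.
    have := h3 Ox; rewrite scale1r addr0 mul1r => h3'.
    have z : iota 0 x = 0 by lra.
    by rewrite h1 // -[_ *: _]addr0 h2 // z addr0 mulrC.
  have hip0 : forall w, ip 0 w = 0.
    by move=> w; have := ipl 1 0 0 w; rewrite scale1r addr0 mul1r => h; lra.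
  have hipv : 0 <= ip ueps v.
    have := ipl dl^-1 ueps 0 v; rewrite addr0 hip0 addr0 => h.
    rewrite h in hvip.
    have : 0 <= dl^-1 * ip ueps v by apply: le_trans hvip; exact: sqr_ge0.
    by rewrite pmulr_rge0 // invr_gt0.
  have mv : measurable_fun O (iota v) := (hL2 v).1.
  have hF : 'd F ueps v = Rintegral mu O (fun x => g x * iota v x).
    apply: hg; exists 1; apply: filterS hw => x h Ox; rewrite h //; exact: kb.
  have E := heq v; rewrite hF /dG_eps in E.
  pose k := fun x => clip (u x / dl).
  have mub : measurable_fun O (fun x => u x - b x) by exact: measurable_funB.
  have R1 := Rint_ae mu O mO lam (iota v) k (measurable_funM mlam mv) (measurable_funM mlam (mk dl)) hw.
  have R2 := Rint_ae mu O mO (fun x => u x - b x) (iota v) k (measurable_funM mub mv) (measurable_funM mub (mk dl)) hw.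
  have R3 := Rint_ae mu O mO g (iota v) k (measurable_funM mg mv) (measurable_funM mg (mk dl)) hw.
  have E' : alpha * ip ueps v + beta * Rintegral mu O (fun x => lam x * k x)
     + Rintegral mu O (fun x => (u x - b x) * k x) = - Rintegral mu O (fun x => g x * k x).
    by rewrite -R1 -R2 -R3.
  clear E R1 R2 R3.
  have iuk := iprod u dl mu_ iu.
  have ibk := iprod b dl mb_ ib.
  have igk := iprod g dl mg ig.
  have ilk := iprod lam dl mlam ilam.
  have Eb : Rintegral mu O (fun x => (u x - b x) * k x) =
      Rintegral mu O (fun x => u x * k x - b x * k x).
    by apply: eq_Rintegral => x _; rewrite mulrBl.
  rewrite Eb in E'.
  rewrite RintegralB // in E'.
  have h1 : 0 <= Rintegral mu O (fun x => u x * k x).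
    apply: Rintegral_ge0 => x _; exact: uclip_ge0.
  have h2 : Rintegral mu O (fun x => b x * k x) <= Rintegral mu O (fun x => `|b x|).
    apply: le_Rintegral => //; first exact: iabs.
    move=> x _; apply: (le_trans (ler_norm _)); rewrite normrM.
    have := kb dl x; have := normr_ge0 (b x); nra.
  have h3 : - Rintegral mu O (fun x => g x * k x) <= Rintegral mu O (fun x => `|g x|).
    apply: (le_trans (ler_norm _)) ; rewrite normrN.
    apply: (le_trans (le_normr_Rintegral _ _)) => //.
    apply: le_Rintegral => //; first exact: iabs (measurable_funM mg (mk dl)) igk.
      exact: iabs.
    move=> x _; rewrite normrM; have := kb dl x; have := normr_ge0 (g x); nra.
  have h4 : 0 <= alpha * ip ueps v by apply: mulr_ge0 => //; exact: ltW.
  lra.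
set m := fine (mu O).
have m0 : 0 <= m by apply: fine_ge0.
have fin : forall dl, 0 < dl -> Rintegral mu O (fun x => `|lam x|) <=
    Rintegral mu O (fun x => lam x * clip (u x / dl)) + 2 * c0 * dl * m.
  move=> dl dl0.
  rewrite -(Rintegral_cst mu mO).
  rewrite -RintegralD //; [|exact: (iprod lam dl mlam ilam)|exact: int_cst].
  apply: le_Rintegral => //.
  - exact: iabs.
  - apply: (eq_integrable mO _ _ _ (integrableD mO (iprod lam dl mlam ilam) (int_cst mu O mO Ofin (2 * c0 * dl)))).
    by move=> x _ /=; rewrite EFinD.
  - by move=> x _; apply: key.
have c00 : 0 <= c0 by have := hD 0 => /andP[h1 h2]; exact: le_trans h2.
apply/ler_addgt0Pr => e e0.
pose K := beta * 2 * c0 * m.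
have K0 : 0 <= K by rewrite /K; apply: mulr_ge0 => //; apply: mulr_ge0 => //; apply: mulr_ge0 => //; exact: ltW.
pose dl := e / (K + 1).
have dl0 : 0 < dl by rewrite /dl divr_gt0 // ltr_pwDr.
have hdl : dl * (K + 1) = e by rewrite /dl divfK // gt_eqF // ltr_pwDr.
have := fin dl dl0; have := claim dl dl0 => c1 c2.
have : beta * Rintegral mu O (fun x => `|lam x|) <=
    beta * Rintegral mu O (fun x => lam x * clip (u x / dl)) + dl * K.
  rewrite /K; have := ler_wpM2l (ltW b0) c2; rewrite mulrDr.
  by move=> h; apply: (le_trans h); rewrite lerD2l le_eqVlt; apply/orP; left; apply/eqP; ring.
nra.
Qed.
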